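(* Let $T$ be a p-string of length $n$ and let $1\le i\le j\le n$. If $\mathrm{prev}(T[i..j])$ is represented by $\mathrm{PPH}(T)$, then $\mathrm{prev}(X)$ is represented by $\mathrm{PPH}(T)$ for every substring $X$ of $T[i..j]$.
   Context: Let $\Sigma$ and $\Pi$ be disjoint alphabets. A p-string is a finite string over $\Sigma\cup\Pi$. For a string $S$, $S[i]$ is its $i$-th character, $S[i..j]$ is the substring from position $i$ to $j$ (empty if $j<i$), and $S[i..]=S[i..|S|]$. The previous encoding $\mathrm{prev}(S)$ of a p-string $S$ of length $n$ is the sequence of length $n$ defined by: - $\mathrm{prev}(S)[i]=S[i]$ if $S[i]\in\Sigma$; - $\mathrm{prev}(S)[i]=0$ if $S[i]\in\Pi$ does not occur in $S[1..i-1]$; - $\mathrm{prev}(S)[i]=i-j$ otherwise, where $j<i$ is the largest position with $S[j]=S[i]$. Sequence hash tree. Let $\langle S_1,\ldots,S_k\rangle$ be a sequence of strings with $S_1=\varepsilon$ and with $S_i$ not a prefix of $S_j$ for any $j<i$. Its sequence hash tree is built as follows. Start from a root representing $\varepsilon$. For $i=2,\ldots,k$, insert as a new node the shortest prefix $p_i$ of $S_i$ that is not yet a node. Attach it as a child of the longest prefix $q_i$ of $S_i$ that is already a node, via an edge labeled $S_i[|q_i|+1]$. The parameterized position heap $\mathrm{PPH}(T)$ is the sequence hash tree of $\langle\varepsilon,\mathrm{prev}(T[n..]),\ldots,\mathrm{prev}(T[1..])\rangle$. A sequence $P$ over $\Sigma\cup\{0,\ldots,n-1\}$ is represented by $\mathrm{PPH}(T)$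 if $\mathrm{PPH}(T)$ has a path starting at the root whose edge labels spell out $P$. *)

(* Defs.v *)
From mathcomp Require Import all_boot.
Set Implicit Arguments. Unset Strict Implicit. Unset Printing Implicit Defensive.

(* Characters of a p-string: inl = static symbol in Sigma, inr = parameter in Pi.
   (The sum type makes Sigma and Pi disjoint.) *)
Section PString.
Variables (Sig Pi : eqType).
Definition pchar := (Sig + Pi)%type.

(* prev-encoding value at 0-indexed position i of S, with character x = S[i]:
   a Sigma symbol is kept; a parameter gets 0 if it does not occur before,
   otherwise the distance i - j to its previous occurrence j. *)
Definition prev_at (S : seq pchar) (i : nat) (x : pchar) : Sig + nat :=
  match x with
  | inl a => inl a
  | inr p => let pre := take i S in
             if x \in pre then inr (index x (rev pre)).+1 else inr 0
  end.

Definition prev_enc (S : seq pchar) : seq (Sig + nat) :=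
  map (fun ix => prev_at S ix.1 ix.2) (zip (iota 0 (size S)) S).

(* 1-indexed substring S[i..j] *)
Definition substr (S : seq pchar) (i j : nat) : seq pchar := drop i.-1 (take j S).
End PString.

(* Sequence hash trees: nodes are identified with the strings they represent;
   an edge is (parent, label, child). *)
Section SHT.
Variable A : eqType.
Definition sht_state := (seq (seq A) * seq (seq A * A * seq A))%type.

Definition sht_step (st : sht_state) (S : seq A) : sht_state :=
  let: (N, E) := st in
  let notnode k := take k S \notin N in
  if has notnode (iota 0 (size S).+1) then
    let p := take (find notnode (iota 0 (size S).+1)) S in
    let m := foldr maxn 0 [seq k <- iota 0 (size S).+1 | take k S \in N] in
    let q := take m S in
    match drop m S with
    | c :: _ => (rcons N p, rcons E (q, c, p))
    | [::] => (N, E)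
    end
  else (N, E).

(* sequence hash tree of <eps, S_2, ..., S_k>; the argument is [S_2; ...; S_k] *)
Definition sht (l : seq (seq A)) : sht_state := foldl sht_step ([:: [::]], [::]) l.

Fixpoint spells (E : seq (seq A * A * seq A)) (u : seq A) (P : seq A) : Prop :=
  match P with
  | [::] => True
  | c :: P' => exists v, (u, c, v) \in E /\ spells E v P'
  end.

Definition represented (t : sht_state) (P : seq A) : Prop := spells t.2 [::] P.
End SHT.

Definition PPH (Sig Pi : eqType) (T : seq (pchar Sig Pi)) : sht_state _ :=
  sht [seq prev_enc (drop k T) | k <- rev (iota 0 (size T))].

(* Main.v *)
Require Import Defs.
From mathcomp Require Import all_boot zify.
Set Implicit Arguments. Unset Strict Implicit. Unset Printing Implicit Defensive.

Section Prev.
Variables (Sig Pi : eqType).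
Local Notation pc := (pchar Sig Pi).

Definition pv (S : seq pc) (x : pc) : Sig + nat :=
  match x with
  | inl a => inl a
  | inr _ => if x \in S then inr (index x (rev S)).+1 else inr 0
  end.

Lemma size_prev (S : seq pc) : size (prev_enc S) = size S.
Proof. by rewrite /prev_enc size_map size_zip size_iota minnn. Qed.

Lemma prev_at_cat (S s' : seq pc) i x : i <= size S ->
  Defs.prev_at (S ++ s') i x = Defs.prev_at S i x.
Proof.
move=> hi; case: x => // p /=.
by rewrite takel_cat.
Qed.

Lemma prev_rcons (S : seq pc) x :
  prev_enc (rcons S x) = rcons (prev_enc S) (pv S x).
Proof.
rewrite /prev_enc size_rcons -addn1 iotaD add0n /= -cats1 zip_cat ?size_iota //.
rewrite map_cat /= cats1; congr rcons.
  apply/eq_in_map => -[i y] /= hin.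
  rewrite prev_at_cat //.
  have := map_f (fun p : nat * pc => p.1) hin.
  rewrite -/(unzip1 _) unzip1_zip ?size_iota // mem_iota /= => /ltnW //.
case: x => // p /=.
by rewrite take_size_cat.
Qed.

Lemma prev_nil : prev_enc ([::] : seq pc) = [::].
Proof. by []. Qed.

Lemma prev_take (S : seq pc) l : prev_enc (take l S) = take l (prev_enc S).
Proof.
elim/last_ind: S l => [|S x IH] l; first by case: l.
rewrite prev_rcons -!cats1.
case: (leqP l (size S)) => hl.
  by rewrite !takel_cat ?size_prev // IH.
rewrite !take_oversize ?size_cat ?size_prev /= ?addn1 //.
by rewrite !cats1 prev_rcons.
Qed.

Definition gfix (s : nat) (v : Sig + nat) : Sig + nat :=
  if v == inr s then inr 0 else v.

Lemma pv_behead (z : pc) Z x : pv Z x = gfix (size Z).+1 (pv (z :: Z) x).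
Proof.
rewrite /gfix; case: x => [a|p] //=.
set x := inr p.
rewrite in_cons rev_cons -cats1 index_cat mem_rev.
case: (boolP (x \in Z)) => hZ /=.
  rewrite orbT.
  case: eqP => // -[] h.
  by move: (index_mem x (rev Z)); rewrite mem_rev hZ h size_rev ltnn.
rewrite orbF; case: (x =P z) => [<-|hz] /=.
  by rewrite eqxx size_rev addn0 eqxx.
by [].
Qed.

Lemma prev_behead (X Y : seq pc) :
  prev_enc X = prev_enc Y -> prev_enc (behead X) = prev_enc (behead Y).
Proof.
elim/last_ind: X Y => [|X x IH] Y.
  by case: Y => // y Y; rewrite -cats1 => /(congr1 size); rewrite size_prev.
case/lastP: Y => [|Y y]; first by move/(congr1 size); rewrite !size_prev size_rcons.
rewrite !prev_rcons => /rcons_inj [hXY hv].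
have hs : size X = size Y by rewrite -(size_prev X) hXY size_prev.
case: X hXY hv hs IH => [|z X] hXY hv hs IH.
  by case: Y hs {hXY hv} => // _; rewrite prev_nil.
case: Y hXY hv hs => [|w Y] // hXY hv [hs].
rewrite /= !prev_rcons (IH _ hXY) /=.
by rewrite (pv_behead z X) (pv_behead w Y) hv hs.
Qed.
End Prev.

Section Tree.
Variable A : eqType.

Lemma pref_take (N : seq (seq A)) :
  (forall u c, rcons u c \in N -> u \in N) ->
  forall u l, u \in N -> take l u \in N.
Proof.
move=> h2; elim/last_ind => [|u c IH] l hu; first by case: l.
rewrite -cats1; case: (leqP l (size u)) => hl.
  by rewrite takel_cat // IH // (h2 _ c).
by rewrite take_oversize ?size_cat /= ?addn1 // cats1.
Qed.

Lemma foldr_maxn_iota f a x : foldr maxn x (iota a f.+1) = maxn (a + f) x.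
Proof.
elim: f a => [|f IH] a; first by rewrite /= addn0.
transitivity (maxn a (foldr maxn x (iota a.+1 f.+1))); first by [].
rewrite IH; lia.
Qed.

Lemma step_spec (N : seq (seq A)) E S :
  [::] \in N -> (forall u c, rcons u c \in N -> u \in N) -> S \notin N ->
  exists f c, [/\ 0 < f <= size S, (forall l, l < f -> take l S \in N),
    take f S \notin N, take f S = rcons (take f.-1 S) c &
    sht_step (N, E) S = (rcons N (take f S), rcons E (take f.-1 S, c, take f S))].
Proof.
move=> h1 h2 hS.
set P := fun k => take k S \notin N.
have hhas : has P (iota 0 (size S).+1).
  by apply/hasP; exists (size S); [rewrite mem_iota add0n ltnSn | rewrite /P /= take_size].
set f := find P (iota 0 (size S).+1).
have hf : f < (size S).+1 by rewrite -[X in _ < X](size_iota 0) -has_find.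
have hPf : P f by have := nth_find 0 hhas; rewrite nth_iota.
have hlt : forall l, l < f -> take l S \in N.
  move=> l hl; have := before_find 0 hl.
  rewrite nth_iota ?add0n; last by apply: ltn_trans hl hf.
  by rewrite /P => /negbFE.
have f0 : 0 < f.
  by case: f hPf {hlt hf} => //; rewrite /P take0 h1.
have hfil : [seq k <- iota 0 (size S).+1 | take k S \in N] = iota 0 f.
  rewrite -(filter_iota_ltn 0 (ltnW hf)).
  apply: eq_in_filter => k _; rewrite add0n.
  case: (ltnP k f) => hk; first by rewrite hlt.
  apply/negbTE/negP => hin; move: hPf; rewrite /P.
  by rewrite -(take_takel S hk) (pref_take h2 _ hin).
have hfS : f <= size S by [].
have hm : foldr maxn 0 (iota 0 f) = f.-1.
  by case: f f0 {hfS hPf hlt hfil hf} => // f' _; rewrite foldr_maxn_iota.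
have hsd : 0 < size (drop f.-1 S) by rewrite size_drop; lia.
case hd: (drop f.-1 S) hsd => [|c s] // _.
have htf : take f S = rcons (take f.-1 S) c.
  have hf1 : f = f.-1 + 1 by lia.
  by rewrite {1}hf1 takeD hd /= take0 cats1.
exists f, c; split => //; first by rewrite f0.
by rewrite /sht_step -/P hhas hfil hm hd -/f.
Qed.

Lemma spells_node (N : seq (seq A)) E :
  (forall u c v, (u, c, v) \in E -> v = rcons u c /\ v \in N) ->
  forall P w, spells E w P -> w \in N -> w ++ P \in N.
Proof.
move=> h4; elim => [|c P IH] w /=; first by rewrite cats0.
move=> [v [hv hs]] hw.
case: (h4 _ _ _ hv) => hveq hvN; subst v.
by rewrite -cat_rcons; apply: IH.
Qed.

Lemma node_spells (N : seq (seq A)) E :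
  (forall u c, rcons u c \in N -> u \in N) ->
  (forall u c, rcons u c \in N -> (u, c, rcons u c) \in E) ->
  forall P w, w ++ P \in N -> spells E w P.
Proof.
move=> h2 h3; elim => [|c P IH] w //= hw.
exists (rcons w c); split; last by apply: IH; rewrite cat_rcons.
apply: h3.
have := pref_take h2 (size w).+1 hw.
by rewrite take_cat ltnNge leqnSn subSnn /= take0 cats1.
Qed.
End Tree.

Section Main.
Variables (Sig Pi : eqType) (T : seq (pchar Sig Pi)).
Local Notation pc := (pchar Sig Pi).
Local Notation n := (size T).

Definition Sk k := prev_enc (drop k T).
Definition st k := foldl (@sht_step _) ([:: [::]], [::])
  [seq Sk m | m <- rev (iota k (n - k))].

Lemma st_n : st n = ([:: [::]], [::]).
Proof. by rewrite /st subnn. Qed.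

Lemma st_S k : k < n -> st k = sht_step (st k.+1) (Sk k).
Proof.
move=> hk; rewrite /st.
have -> : n - k = (n - k.+1).+1 by lia.
by rewrite [iota _ _]/= rev_cons map_rcons foldl_rcons.
Qed.

Lemma st_0 : st 0 = PPH T.
Proof. by rewrite /st subn0. Qed.

Definition Inv k (s : sht_state (Sig + nat)%type) :=
 [/\ [::] \in s.1, (forall u c, rcons u c \in s.1 -> u \in s.1),
     (forall u c, rcons u c \in s.1 -> (u, c, rcons u c) \in s.2) /\
     (forall u c v, (u, c, v) \in s.2 -> v = rcons u c /\ v \in s.1),
     (forall u, u \in s.1 -> size u <= n - k) &
     (forall (x : pc) X, prev_enc (x :: X) \in s.1 -> prev_enc X \in s.1)].

Lemma size_Sk k : size (Sk k) = n - k.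
Proof. by rewrite /Sk size_prev size_drop. Qed.

Lemma stepT k : k < n -> Inv k.+1 (st k.+1) ->
  exists f c, [/\ 0 < f <= n - k, (forall l, l < f -> take l (Sk k) \in (st k.+1).1),
    take f (Sk k) \notin (st k.+1).1, take f (Sk k) = rcons (take f.-1 (Sk k)) c &
    st k = (rcons (st k.+1).1 (take f (Sk k)), rcons (st k.+1).2 (take f.-1 (Sk k), c, take f (Sk k)))].
Proof.
move=> hk [h1 h2 [h3 h4] h5 h6].
have hS : Sk k \notin (st k.+1).1.
  by apply/negP => /h5; rewrite size_Sk; lia.
have [f [c [hf hlt hnot htf hst]]] := step_spec (st k.+1).2 h1 h2 hS.
exists f, c; split => //; first by rewrite -size_Sk.
by rewrite st_S // -hst; case: (st k.+1).
Qed.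


Lemma Inv_init : Inv n ([:: [::]], [::]).
Proof.
split => //=; try split => //.
- by move=> u c; rewrite inE => /eqP /(congr1 size); rewrite size_rcons.
- by move=> u c; rewrite inE => /eqP /(congr1 size); rewrite size_rcons.
- by move=> u; rewrite inE => /eqP ->.
Qed.

Lemma Inv_all d : forall k, k <= n -> n - k <= d -> Inv k (st k).
Proof.
elim: d => [|d IH] k hkn hd.
  have -> : k = n by lia.
  by rewrite st_n; exact: Inv_init.
case: (leqP (n - k) d) => hd'; first exact: IH.
have hk : k < n by lia.
have hI1 := IH k.+1 hk ltac:(lia).
have [f [c [hf hlt hnot htf hst]]] := stepT hk hI1.
case: hI1 => h1 h2 [h3 h4] h5 h6.
rewrite hst /=.
split.
- by rewrite mem_rcons in_cons h1 orbT.
- move=> u c'; rewrite !mem_rcons !in_cons => /orP [/eqP|] hu.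
    rewrite htf in hu; case/rcons_inj: hu => -> _.
    by rewrite hlt ?orbT //; lia.
  by rewrite (h2 _ _ hu) orbT.
- split.
    move=> u c'; rewrite mem_rcons in_cons => /orP [/eqP|] hu.
      rewrite mem_rcons in_cons; apply/orP; left; apply/eqP.
      by case/rcons_inj: (etrans hu htf) => -> ->; rewrite htf.
    by rewrite mem_rcons in_cons (h3 _ _ hu) orbT.
  move=> u c' v; rewrite mem_rcons in_cons => /orP [/eqP [-> -> ->]|hu].
    by split => //=; rewrite mem_rcons in_cons eqxx.
  case: (h4 _ _ _ hu) => hveq hv; split => //.
  by rewrite /= mem_rcons in_cons hv orbT.
- move=> u; rewrite mem_rcons in_cons => /orP [/eqP ->|hu].
    rewrite size_takel; first by case/andP: hf.
    by rewrite size_Sk; case/andP: hf.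
  by have := h5 _ hu; lia.
- move=> x X; rewrite !mem_rcons !in_cons => /orP [/eqP hx|hx]; last by rewrite (h6 _ _ hx) orbT.
  apply/orP; right.
  have f0 : 0 < f by case/andP: hf.
  case hdk: (drop k T) => [|y Y0].
    by move: (size_drop k T); rewrite hdk /=; lia.
  have hdk1 : drop k.+1 T = Y0 by rewrite -[k.+1]add1n -drop_drop hdk /= drop0.
  have hpX : prev_enc X = take f.-1 (Sk k.+1).
    have : prev_enc (x :: X) = prev_enc (y :: take f.-1 Y0).
      by rewrite hx /Sk hdk -prev_take -{1}(prednK f0).
    by move/prev_behead => /= ->; rewrite /Sk hdk1 prev_take.
  rewrite hpX.
  case: (ltnP 1 f) => hf1; last first.
    have -> : f.-1 = 0 by lia.
    by rewrite take0.
  have hk1 : k.+1 < n by lia.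
  have hI2 := IH k.+2 hk1 ltac:(lia).
  have [f' [c2 [hf' hlt' hnot' htf' hst']]] := stepT hk1 hI2.
  case: hI2 => g1 g2 [g3 g4] g5 g6.
  case: (leqP f.-1 f') => hff.
    rewrite -(take_takel _ hff); apply: (pref_take h2).
    by rewrite hst' /= mem_rcons mem_head.
  exfalso.
  have hq := hlt f.-1 ltac:(lia).
  rewrite hst' /= mem_rcons in_cons in hq.
  case/orP: hq => [/eqP hq|hq].
    move: (congr1 size hq); rewrite !size_takel ?size_Sk; lia.
  have hf1' : 0 < f.-1 by lia.
  have e : take f.-1 (Sk k) = prev_enc (y :: take f.-2 Y0).
    by rewrite /Sk hdk -prev_take -{1}(prednK hf1').
  rewrite e in hq.
  move/g6: hq; rewrite prev_take -hdk1 -/(Sk k.+1) => h.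
  have := pref_take g2 f' h; rewrite take_takel; last by lia.
  by rewrite (negbTE hnot').
Qed.

End Main.

Lemma lemma2_aux (Sig Pi : eqType) (T : seq (pchar Sig Pi)) (Y : seq (pchar Sig Pi)) :
  represented (PPH T) (prev_enc Y) ->
  forall X : seq (pchar Sig Pi), infix X Y ->
    represented (PPH T) (prev_enc X).
Proof.
have [h1 h2 [h3 h4] h5 h6] := Inv_all (leq0n (size T)) (leqnn (size T - 0)).
rewrite /represented -st_0 => hY X /infixP [s1 [s2 hs]].
have hN : prev_enc Y \in (st T 0).1 by have := spells_node h4 hY h1.
have hN2 : prev_enc (X ++ s2) \in (st T 0).1.
  rewrite hs in hN; clear hs hY; elim: s1 hN => // z s1 IH /= hN.
  by apply: IH; apply: (h6 z).
have hX : prev_enc X \in (st T 0).1.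
  by have := pref_take h2 (size X) hN2; rewrite -prev_take take_size_cat.
by apply: (node_spells h2 h3).
Qed.

Theorem lemma2 (Sig Pi : eqType) (T : seq (pchar Sig Pi)) (i j : nat) :
  1 <= i <= j -> j <= size T ->
  represented (PPH T) (prev_enc (substr T i j)) ->
  forall X : seq (pchar Sig Pi), infix X (substr T i j) ->
    represented (PPH T) (prev_enc X).
Proof. by move=> _ _; apply: lemma2_aux. Qed.
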